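(* For every $m\ge1$ and every $n\ge\lfloor m/2\rfloor+m$, there exist $m$ preference lists on the ground set $\{1,\ldots,n\}$ for which the number of distinct images of efficient matchings is $\Omega\!\left(\frac{2^m}{\sqrt{m}}\right)$ (with the implied constant independent of $m,n$).
   Context: A system of $m$ preference lists on $\{1,\ldots,n\}$ assigns to each $i\in\{1,\ldots,m\}$ a list $L(i)$, a strict total ordering of $\{1,\ldots,n\}$. A matching is an injective map $\pi:\{1,\ldots,m\}\to\{1,\ldots,n\}$, and its image is the set $\pi(\{1,\ldots,m\})$. A matching $\pi$ is better than a distinct matching $\sigma$ if for each $i$ either $\pi(i)=\sigma(i)$ or $\pi(i)$ appears before $\sigma(i)$ in $L(i)$. A matching is efficient if no matching is better than it. *)

(* Defs.v *)
From mathcomp Require Import all_boot all_fingroup.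
Set Implicit Arguments. Unset Strict Implicit. Unset Printing Implicit Defensive.

(* Ground set {1,...,n} is modelled by 'I_n, agents {1,...,m} by 'I_m.
   A preference list L(i) (a strict total order of 'I_n) is encoded by the
   bijection [pos : {perm 'I_n}] giving the position of each element in the
   list: x appears before y in L(i) iff pos x < pos y. *)
Definition prefsys (m n : nat) := {ffun 'I_m -> {perm 'I_n}}.

Definition before m n (L : prefsys m n) (i : 'I_m) (x y : 'I_n) : bool :=
  L i x < L i y.

Definition matching m n (p : {ffun 'I_m -> 'I_n}) : bool := injectiveb p.

Definition image m n (p : {ffun 'I_m -> 'I_n}) : {set 'I_n} := p @: 'I_m.

Definition better m n (L : prefsys m n) (p s : {ffun 'I_m -> 'I_n}) : bool :=
  [&& matching p, matching s, p != s &
      [forall i, (p i == s i) || before L i (p i) (s i)]].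

Definition efficient m n (L : prefsys m n) (p : {ffun 'I_m -> 'I_n}) : bool :=
  matching p && [forall s, ~~ better L s p].

Definition num_eff_images m n (L : prefsys m n) : nat :=
  #|[set image p | p in [pred p | efficient L p]]|.

(* Main.v *)
Require Import Defs.
From mathcomp Require Import all_boot all_fingroup.
From Stdlib Require Import Reals.
From mathcomp Require Import zify.
From Stdlib Require Import Lra.


Section Constr.
Variables (m n k : nat).
Hypothesis hkm : (k + m <= n.+1)%N.

Definition Lp : prefsys m n.+1 :=
  [ffun i : 'I_m => tperm (inord k : 'I_n.+1) (inord (k + i))].

Lemma ltk (i : 'I_m) : (k + i < n.+1)%N.
Proof. apply: leq_trans hkm; rewrite ltn_add2l; exact: ltn_ord. Qed.

Lemma ltk0 (i : 'I_m) : (k < n.+1)%N.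
Proof. apply: leq_ltn_trans (ltk i); exact: leq_addr. Qed.

Lemma P1 i (y : 'I_n.+1) : (y < k)%N -> Lp i y = y.
Proof.
move=> hy; rewrite ffunE tpermD //; apply/eqP=> e; move: hy; rewrite -e.
  by rewrite inordK ?ltnn // ltk0.
by rewrite inordK ?ltk // ltnNge leq_addr.
Qed.

Lemma P2 i (y : 'I_n.+1) : (k <= y)%N -> (k <= Lp i y)%N.
Proof.
move=> hy; rewrite ffunE; case: tpermP => _.
  by rewrite inordK ?ltk // leq_addr.
by rewrite inordK ?ltk0.
done.
Qed.

Lemma P3 i : Lp i (inord (k + i)) = inord k.
Proof. by rewrite ffunE tpermR. Qed.

Definition pi (S : {set 'I_m}) : {ffun 'I_m -> 'I_n.+1} :=
  [ffun i => if i \in S then inord (index i (enum S)) else inord (k + i)].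

Lemma pi_val (S : {set 'I_m}) (i : 'I_m) : #|S| = k ->
  nat_of_ord (pi S i) = if i \in S then index i (enum S) else (k + i)%N.
Proof.
move=> cS; rewrite ffunE; case: ifP => hi.
  rewrite inordK //; apply: (@ltn_trans k) (ltk0 i).
  by rewrite -cS cardE index_mem mem_enum.
by rewrite inordK // ltk.
Qed.

Lemma pi_inS (S : {set 'I_m}) (i : 'I_m) : #|S| = k -> i \in S -> (pi S i < k)%N.
Proof.
move=> cS hi; rewrite pi_val // hi -cS cardE index_mem mem_enum //.
Qed.

Lemma pi_inj (S : {set 'I_m}) : #|S| = k -> injective (pi S).
Proof.
move=> cS i j /(congr1 val) /=; rewrite !pi_val //.
case: ifP => hi; case: ifP => hj.
- by move=> e; have := congr1 (nth i (enum S)) e; rewrite !nth_index ?mem_enum.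
- move=> e; have := pi_inS _ _ cS hi; rewrite pi_val // hi e.
  by rewrite ltnNge leq_addr.
- move=> e; have := pi_inS _ _ cS hj; rewrite pi_val // hj -e.
  by rewrite ltnNge leq_addr.
- by move/eqP; rewrite eqn_add2l => /eqP /val_inj.
Qed.

Lemma bmem (S : {set 'I_m}) (i : 'I_m) : #|S| = k ->
  (inord (k + i) \in Defs.image (pi S)) = (i \notin S).
Proof.
move=> cS; apply/imsetP/idP.
  case=> j _ /(congr1 val) /=; rewrite pi_val // inordK ?ltk //.
  case: ifP => hj.
    move=> e; have := pi_inS _ _ cS hj; rewrite pi_val // hj -e.
    by rewrite ltnNge leq_addr.
  by move/eqP; rewrite eqn_add2l => /eqP /val_inj ->; rewrite hj.
move=> hi; exists i => //; apply: val_inj => /=; rewrite pi_val //.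
by rewrite (negbTE hi) inordK // ltk.
Qed.

Lemma image_inj : {in [pred S : {set 'I_m} | #|S| == k] &,
  injective (fun S => Defs.image (pi S))}.
Proof.
move=> S1 S2 /eqP c1 /eqP c2 e; apply/setP => i.
have := bmem _ i c1; rewrite e bmem //.
by move/negb_inj.
Qed.


Lemma cardA : #|[set y : 'I_n.+1 | (y < k)%N]| = k.
Proof.
have hk : (k <= n.+1)%N by apply: leq_trans hkm; exact: leq_addr.
have -> : [set y : 'I_n.+1 | (y < k)%N] = [set widen_ord hk j | j : 'I_k].
  apply/setP => y; rewrite inE; apply/idP/imsetP.
    by move=> hy; exists (Ordinal hy) => //; apply: val_inj.
  by case=> j _ ->; rewrite /= ltn_ord.
rewrite card_imset ?card_ord //.
by move=> a b /(congr1 val) /= /val_inj.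
Qed.

Lemma eff (S : {set 'I_m}) : #|S| = k -> efficient Lp (pi S).
Proof.
move=> cS; apply/andP; split; first exact/injectiveP/(pi_inj _ cS).
apply/forallP => s; apply/negP; case/and4P => ms _ neq /forallP H.
have sinj : injective s by exact/injectiveP.
suff : s = pi S by move/eqP; rewrite (negbTE neq).
have hS i : i \in S -> (s i < k)%N /\ (s i <= pi S i)%N.
  move=> hi; have pk := pi_inS _ _ cS hi; have := H i; case/orP.
    by move/eqP ->.
  rewrite /before (P1 _ _ pk) => hl.
  have sk : (s i < k)%N.
    rewrite ltnNge; apply/negP => /(P2 i _); rewrite leqNgt.
    by rewrite (ltn_trans hl pk).
  by split => //; rewrite -(P1 i _ sk) ltnW.
set A := [set y : 'I_n.+1 | (y < k)%N].
have eqA (f : {ffun 'I_m -> 'I_n.+1}) : injective f ->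
    (forall i, i \in S -> (f i < k)%N) -> f @: S = A.
  move=> finj fk; apply/eqP; rewrite eqEcard cardA card_imset // cS leqnn andbT.
  by apply/subsetP => y /imsetP [i hi ->]; rewrite inE fk.
have sA := eqA s sinj (fun i hi => (hS i hi).1).
have pA := eqA (pi S) (pi_inj _ cS) (fun i => pi_inS _ i cS).
have hout i : i \notin S -> s i = pi S i.
  move=> hi; have := H i; case/orP; first by move/eqP.
  rewrite /before (_ : pi S i = inord (k + i)); last by rewrite ffunE (negbTE hi).
  rewrite P3 inordK ?(ltk0 i) // => hl.
  have sk : (s i < k)%N.
    rewrite ltnNge; apply/negP => /(P2 i _); rewrite leqNgt.
    by rewrite hl.
  have : s i \in A by rewrite inE.
  by rewrite -sA => /imsetP [j hj /sinj e]; move: hi; rewrite e hj.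
have sums : (\sum_(i in S) (pi S i - s i) = 0)%N.
  apply/eqP; rewrite -(eqn_add2r (\sum_(i in S) nat_of_ord (s i))) add0n.
  rewrite -big_split /=.
  rewrite (eq_bigr (fun i => nat_of_ord (pi S i))); last first.
    by move=> i hi; rewrite subnK // (hS i hi).2.
  rewrite -(big_imset (h := pi S) (fun y : 'I_n.+1 => nat_of_ord y)); last by move=> a b _ _; exact: (pi_inj _ cS).
  rewrite -(big_imset (h := s) (fun y : 'I_n.+1 => nat_of_ord y)); last by move=> a b _ _; exact: sinj.
  by rewrite sA pA.
apply/ffunP => i; case: (boolP (i \in S)) => hi; last exact: hout.
move/eqP: sums; rewrite sum_nat_eq0 => /forallP /(_ i); rewrite hi /= subn_eq0.
move=> h; apply: val_inj; apply/eqP; rewrite eqn_leq h (hS i hi).2.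
done.
Qed.

Lemma count_bound : ('C(m, k) <= num_eff_images Lp)%N.
Proof.
rewrite /num_eff_images.
set D := [set S : {set 'I_m} | #|S| == k].
have <- : #|[set Defs.image (pi S) | S in D]| = 'C(m, k).
  rewrite card_in_imset; first by rewrite card_draws card_ord.
  by move=> S1 S2; rewrite !inE; exact: image_inj.
apply: subset_leq_card; apply/subsetP => y /imsetP [S hS ->].
apply/imsetP; exists (pi S) => //.
by rewrite inE; apply: eff; move: hS; rewrite inE => /eqP.
Qed.

End Constr.

Lemma bin_rec k : (k.+1 * 'C(k.+1.*2, k.+1) = 2 * (k.*2.+1) * 'C(k.*2, k))%N.
Proof.
have e1 := mul_bin_diag (k.*2.+2) k.
have e2 := mul_bin_diag (k.*2.+1) k.
have e3 : 'C(k.*2.+1, k.+1) = 'C(k.*2.+1, k).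
  rewrite -(bin_sub (n:=k.*2.+1) (m:=k.+1)); last by rewrite ltnS -addnn leq_addl.
  congr 'C(_, _); rewrite -addnn; lia.
rewrite /= e3 in e2; rewrite doubleS -e1 /=.
rewrite -addnn in e2 *; clear e1 e3.
move: e2; set X := 'C(_.+1, k); set Y := 'C(_, k); move=> e2; clearbody X Y; nia.
Qed.

Lemma bin_lb k : (0 < k)%N -> (expn 16 k <= 4 * k * expn 'C(k.*2, k) 2)%N.
Proof.
elim: k => [//|k IH] _.
case: k IH => [|k] IH; first by [].
have := IH isT => {}IH.
have e := bin_rec k.+1.
set C := 'C(k.+1.*2, k.+1) in IH e *.
set D := 'C(k.+2.*2, k.+2) in e *.
rewrite -(leq_pmul2l (ltn0Sn k.+1)).
have -> : (k.+2 * (4 * k.+2 * expn D 2) = 4 * expn (k.+2 * D) 2)%N.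
  by rewrite !expnS !expn0; nia.
rewrite e expnS.
have h : (4 * k.+1 * k.+2 <= expn (k.+1.*2.+1) 2)%N by rewrite -addnn; nia.
move: IH h; clearbody C; rewrite -addnn; nia.
Qed.

Lemma nat_bound m : (0 < m)%N -> (expn 4 m <= 4 * m * expn 'C(m, m./2) 2)%N.
Proof.
move=> hm; have e := odd_double_half m.
rewrite -e half_bit_double; rewrite -e in hm; move: hm.
move: (m./2) => k; case: (odd m) => /= hm.
- have e3 : 'C(k.*2.+1, k.+1) = 'C(k.*2.+1, k).
    rewrite -(bin_sub (n:=k.*2.+1) (m:=k.+1)); last by rewrite ltnS -addnn leq_addl.
    congr 'C(_, _); rewrite -addnn; lia.
  have h := bin_lb _ (ltn0Sn k).
  rewrite doubleS binS e3 in h.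
  move: h; rewrite add1n; set D := 'C(_, k); clearbody D.
  rewrite !expnS -mul2n expnM !expn0 !muln1 (_ : expn 4 2 = 16) //.
  move: (expn 16 k) => X; nia.
- have k0 : (0 < k)%N by move: hm; rewrite -addnn; lia.
  have h := bin_lb _ k0; rewrite add0n (_ : expn 4 k.*2 = expn 16 k); last by rewrite -mul2n expnM.
  move: h; set D := 'C(_, k); clearbody D; rewrite -mul2n.
  move: (expn 16 k) => X; nia.
Qed.

Lemma INR_expn a b : INR (expn a b) = (INR a ^ b)%R.
Proof.
elim: b => [|b IH] //=; rewrite expnS -multE mult_INR IH //.
Qed.

Lemma real_bound m : (0 < m)%N ->
  (1/2 * (2 ^ m) / sqrt (INR m) <= INR 'C(m, m./2))%R.
Proof.
move=> hm; have := nat_bound _ hm => /leP /le_INR.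
rewrite -!multE !mult_INR !INR_expn.
have sp : (0 < sqrt (INR m))%R by apply: sqrt_lt_R0; apply: lt_0_INR; apply/ltP.
have ss : (sqrt (INR m) * sqrt (INR m) = INR m)%R by apply: sqrt_sqrt; apply: pos_INR.
have e4 : (INR 4 ^ m = 2 ^ m * 2 ^ m)%R.
  by rewrite -Rpow_mult_distr; congr (_ ^ _)%R; simpl; lra.
rewrite e4 => h; rewrite -ss in h; move: h.
have C0 := pos_INR 'C(m, m./2).
have P0 : (0 <= 2 ^ m)%R by apply: pow_le; lra.
move: C0 P0 sp; set C := INR _; set P := (2 ^ m)%R; set s := sqrt _.
move=> C0 P0 sp h.
apply: (Rmult_le_reg_r s) => //.
have -> : (1 / 2 * P / s * s = P / 2)%R by field; lra.
rewrite (_ : INR 4 = 4%R) in h; last by simpl; lra.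
have cs : (0 <= C * s)%R by nra.
destruct (Rle_or_lt (P / 2) (C * s)) as [|hl]; first by [].
exfalso; nra.
Qed.

Theorem proposition1 :
  exists c : R, (0 < c)%R /\
    forall m n : nat, (1 <= m)%N -> (m./2 + m <= n)%N ->
      exists L : prefsys m n,
        (c * (2 ^ m) / sqrt (INR m) <= INR (num_eff_images L))%R.
Proof.
exists (1/2)%R; split; first lra.
move=> m n hm; case: n => [|n] hn; first by move: hn hm; lia.
exists (Lp m n (m./2)).
apply: Rle_trans (real_bound _ hm) _.
apply: le_INR; apply/leP; exact: count_bound.
Qed.
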